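(* Let $\mathcal G$ be a Lie superalgebra over a field of characteristic zero, with a direct sum decomposition $\mathcal G=\mathcal H\oplus\mathcal E$ of vector spaces where $\mathcal H$ is a subalgebra. Let $\mathcal S$, the projections $A\mapsto A_{\mathcal H}$, and the extended bracket $[\cdot,\cdot]$ be as described below. Then for any $A,B\in\mathcal S$, $[A_{\mathcal H},B_{\mathcal H}]=[A_{\mathcal H},B_{\mathcal H}]_{\mathcal H}$. Thus the subspace $\mathcal S_{\mathcal H}$ of the Lie superalgebra $(\mathcal S,[\cdot,\cdot])$ is a subalgebra.
   Context: Set $\mathcal U_1=\mathcal G$ with its $\mathbb Z_2$-grading. For $p\ge1$ define recursively $\mathcal U_{-p+1}=\mathrm{Hom}(\mathcal U_1,\mathcal U_{-p+2})$, $\mathbb Z_2$-graded by declaring $A$ even (resp. odd) if it preserves (resp. reverses) parity; $|u|$ is the parity of a homogeneous element. Elements of $\mathcal U_{1-p}$ are operators of order $p$ (elements of $\mathcal G$ have order $0$), identified for $p\ge1$ with $p$-linear maps $A(x_1,\dots,x_p)=A(x_1)\cdots(x_p)$; $\mathcal U_{1-}=\bigoplus_{p\ge0}\mathcal U_{1-p}$. An operator of order $p\ge2$ is symmetric if $A(\dots,x_i,x_{i+1},\dots)=(-1)^{|x_i||x_{i+1}|}A(\dots,x_{i+1},x_i,\dots)$ for all homogeneous arguments and all $i$; operators of order $0$ or $1$ are symmetric; $\mathcal S$ is the span of symmetric operators. Define $\circ$: $A\circ y=A(y)$, $y\circ A=0$ for $A$ of order $\ge1$, $y\in\mathcal U_1$;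 for $A,B$ of orders $\ge1$, recursively $(A\circ B)(x)=A\circ B(x)+(-1)^{|B||x|}A(x)\circ B$. Define $\bullet$: $A_p\bullet B_q=\frac{p!q!}{(p+q-1)!}A_p\circ B_q$ for orders $p,q\ge1$; $A_p\bullet x=pA_p(x)$, $x\bullet A_p=0$, $x\bullet y=0$ for $x,y\in\mathcal U_1$. The bracket of $\mathcal G$ extends to $\mathcal U_{1-}$: on $\mathcal G$ it is the given bracket, and for operators $A,B$ of orders $p,q$ with $p+q\ge1$, $[A,B]$ is the operator of order $p+q$ defined recursively by $[A,B]\bullet x=[A,B\bullet x]+(-1)^{|x||B|}[A\bullet x,B]$ for all $x\in\mathcal G$; $\mathcal S$ is closed under this bracket. For $x\in\mathcal G$ write $x=x_{\mathcal H}+x_{\mathcal E}$ with $x_{\mathcal H}\in\mathcal H$, $x_{\mathcal E}\in\mathcal E$. For an operator $A$ of order $\ge1$ define $A_{\mathcal H},A_{\mathcal E}$ recursively by $A_{\mathcal H}\bullet x=(A\bullet x)_{\mathcal H}$, $A_{\mathcal E}\bullet x=(A\bullet x)_{\mathcal E}$ for all $x\in\mathcal G$ (equivalently $A_{\mathcal H}(x_1,\dots,x_p)=(A(x_1,\dots,x_p))_{\mathcal H}$, similarly for $\mathcal E$). $\mathcal S_{\mathcal H}$ (resp. $\mathcal S_{\mathcal E}$) is the span of all $A_{\mathcal H}$ (resp. $A_{\mathcal E}$) with $A\in\mathcal S$. *)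

(* Defs.v *)
From HB Require Import structures.
From mathcomp Require Import all_boot all_order all_algebra.
Set Implicit Arguments. Unset Strict Implicit. Unset Printing Implicit Defensive.
Import Order.TTheory GRing.Theory Num.Theory.
Local Open Scope ring_scope.

(* Conventions:
   - G : lmodType K is the underlying vector space; its Z2-grading is given by
     the two parity projections  par false  (onto G_0) and  par true (onto G_1).
   - br : G -> G -> G is the super bracket.
   - The decomposition G = H (+) E is given by the projection pH : x |-> x_H
     (H = image of pH, E = kernel of pH, x_E = x - x_H).
   - An operator of order p is a p-linear map G^p -> G, represented as a
     function  Op := seq G -> G  of which only the values on sequences of
     length p matter; A(x1,...,xp) = A [:: x1; ...; xp] = A(x1)...(xp).
     An operator of order 0 (an element g of G = U_1) is the function whose
     value at [::] is g.
   - An element of U_{1-} = (+)_p U_{1-p} is a finitely supported family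
     A : nat -> Op whose p-th component is an operator of order p. *)

Section SuperDefs.
Variable K : fieldType.
Variable G : lmodType K.

Definition Op := seq G -> G.

Definition is_grading (par : bool -> G -> G) : Prop :=
  [/\ forall b, linear (par b),
      forall b x, par b (par b x) = par b x,
      forall b x, par b (par (~~ b) x) = 0
    & forall x, par false x + par true x = x].

Definition homog (par : bool -> G -> G) (b : bool) (x : G) : Prop :=
  par b x = x.

Definition sgn (b : bool) : K := (-1) ^+ b.

Definition is_lie_superalgebra (par : bool -> G -> G) (br : G -> G -> G) : Prop :=
  is_grading par /\
  [/\ forall y, linear (br ^~ y),
      forall x, linear (br x),
      forall a b x y, homog par a x -> homog par b y -> homog par (a (+) b) (br x y),
      forall a b x y, homog par a x -> homog par b y ->
        br x y = - (sgn (a && b) *: br y x)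
    &
      forall a b x y z, homog par a x -> homog par b y ->
        br x (br y z) = br (br x y) z + sgn (a && b) *: br y (br x z)].

Definition is_subalgebra_decomp (par : bool -> G -> G) (br : G -> G -> G)
    (pH : G -> G) : Prop :=
  [/\ linear pH,
      forall x, pH (pH x) = pH x,
      forall b x, pH (par b (pH x)) = par b (pH x)
    &
      forall x y, pH (br (pH x) (pH y)) = br (pH x) (pH y)].

Definition multilinear (p : nat) (A : Op) : Prop :=
  forall (xs ys : seq G) (k : K) (x y : G), ((size xs + size ys).+1 = p)%N ->
    A (xs ++ (k *: x + y) :: ys) = k *: A (xs ++ x :: ys) + A (xs ++ y :: ys).

Definition symmetric (par : bool -> G -> G) (p : nat) (A : Op) : Prop :=
  forall (xs ys : seq G) (x y : G) (c d : bool), ((size xs + size ys).+2 = p)%N ->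
    A (xs ++ par c x :: par d y :: ys)
    = sgn (c && d) *: A (xs ++ par d y :: par c x :: ys).

(* the parity-b component of an operator: on homogeneous arguments
   x1,...,xp it is the component of A(x1,...,xp) of parity b + sum |xi|. *)
Fixpoint opart (par : bool -> G -> G) (b : bool) (B : Op) (xs : seq G) : G :=
  match xs with
  | [::] => par b (B [::])
  | x :: rest => \sum_(c : bool) opart par (b (+) c) (fun ys => B (par c x :: ys)) rest
  end.

Definition bullet (p : nat) (A : Op) (x : G) : Op :=
  fun ys => p%:R *: A (x :: ys).

(* [A, B] for A of order p, B of order q and B homogeneous of parity b,
   evaluated at xs (of length p + q).  Defined by the recursion
     [A,B] . x = [A, B . x] + (-1)^{|x||B|} [A . x, B]   (x homogeneous)
   where [A,B] . x = (p+q) [A,B](x), and y . C = 0 for y of order 0;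
   the base case (p = q = 0) is the bracket of G. *)
Fixpoint brk (par : bool -> G -> G) (br : G -> G -> G) (xs : seq G)
    (p q : nat) (b : bool) (A B : Op) : G :=
  match xs with
  | [::] => br (A [::]) (B [::])
  | x :: rest =>
      (p + q)%N%:R^-1 *: \sum_(c : bool)
        ((if q is q'.+1 then
            brk par br rest p q' (b (+) c) A (bullet q B (par c x)) else 0)
         + sgn (c && b) *:
           (if p is p'.+1 then
              brk par br rest p' q b (bullet p A (par c x)) B else 0))
  end.

(* the bracket of operators of orders p and q, extended bilinearly
   (B split into its homogeneous components) *)
Definition opbr (par : bool -> G -> G) (br : G -> G -> G)
    (p q : nat) (A B : Op) : Op :=
  fun xs => \sum_(b : bool) brk par br xs p q b A (opart par b B).

Definition Uop := nat -> Op.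

Definition in_U (A : Uop) : Prop :=
  (forall p, multilinear p (A p)) /\
  exists N, forall p, (N <= p)%N -> forall xs, size xs = p -> A p xs = 0.

(* S = span of the symmetric operators: an element of U_{1-} all of whose
   homogeneous-order components are symmetric *)
Definition in_S (par : bool -> G -> G) (A : Uop) : Prop :=
  in_U A /\ forall p, symmetric par p (A p).

Definition Ubr (par : bool -> G -> G) (br : G -> G -> G) (A B : Uop) : Uop :=
  fun n xs => \sum_(i < n.+1) opbr par br i (n - i)%N (A i) (B (n - i)%N) xs.

Definition UprojH (pH : G -> G) (A : Uop) : Uop := fun p xs => pH (A p xs).

(* equality in U_{1-} (operators of order p are determined by their values
   on sequences of length p) *)
Definition Ueq (A B : Uop) : Prop :=
  forall p xs, size xs = p -> A p xs = B p xs.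

End SuperDefs.

(* Main.v *)
Require Import Defs.
From HB Require Import structures.
From mathcomp Require Import all_boot all_order all_algebra.
From mathcomp Require Import ring zify.
Import Order.TTheory GRing.Theory Num.Theory.
Local Open Scope ring_scope.

Section Aux.
Variable (K : fieldType) (G : lmodType K).

Lemma lin0 (f : G -> G) : linear f -> f 0 = 0.
Proof.
move=> Hf; have h := Hf 1 0 0; rewrite !scale1r !addr0 in h.
by apply: (@addrI _ (f 0)); rewrite addr0 -h.
Qed.

Lemma linZ (f : G -> G) k u : linear f -> f (k *: u) = k *: f u.
Proof. move=> Hf; have h := Hf k u 0; by rewrite !addr0 (lin0 _ Hf) addr0 in h. Qed.

Lemma linD (f : G -> G) u v : linear f -> f (u + v) = f u + f v.
Proof. move=> Hf; have h := Hf 1 u v; by rewrite !scale1r in h. Qed.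

Lemma comb1 (k s : K) (a1 a2 b1 b2 : G) :
  (k *: a1 + a2) + s *: (k *: b1 + b2) = k *: (a1 + s *: b1) + (a2 + s *: b2).
Proof. by rewrite !scalerDr !scalerA (mulrC s k) addrACA. Qed.

Lemma step_lin (n k : K) (s : bool -> K) (F F1 F2 H H1 H2 : bool -> G) :
  (forall c, F c = k *: F1 c + F2 c) -> (forall c, H c = k *: H1 c + H2 c) ->
  n *: \sum_(c : bool) (F c + s c *: H c)
  = k *: (n *: \sum_(c : bool) (F1 c + s c *: H1 c))
    + n *: \sum_(c : bool) (F2 c + s c *: H2 c).
Proof.
move=> EF EH; rewrite !big_bool /= !EF !EH !comb1.
idtac.
by rewrite addrACA -scalerDr (scalerDr n) (scalerA n) mulrC -scalerA.
Qed.

Lemma step_scale (n k : K) (s : bool -> K) (F F1 H H1 : bool -> G) :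
  (forall c, F c = k *: F1 c) -> (forall c, H c = k *: H1 c) ->
  n *: \sum_(c : bool) (F c + s c *: H c)
  = k *: (n *: \sum_(c : bool) (F1 c + s c *: H1 c)).
Proof.
move=> EF EH; rewrite (scalerA k) mulrC -scalerA (scaler_sumr k); congr (n *: _).
apply: eq_bigr => c _; by rewrite EF EH scalerDr !scalerA mulrC.
Qed.

Lemma ML_zero n (A : Op G) xs ys :
  multilinear n A -> (size xs + size ys).+1 = n -> A (xs ++ 0 :: ys) = 0.
Proof.
move=> HA Hs; have h := HA xs ys 1 0 0 Hs; rewrite !scale1r !addr0 in h.
by apply: (@addrI _ (A (xs ++ 0 :: ys))); rewrite addr0 -h.
Qed.

Lemma ML_bullet n m (A : Op G) x :
  multilinear n.+1 A -> multilinear n (bullet m A x).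
Proof.
move=> HA xs ys k u v Hs; rewrite /bullet.
have := HA (x :: xs) ys k u v; rewrite /= addSn Hs => /(_ erefl) ->.
by rewrite scalerDr !scalerA mulrC.
Qed.

Lemma ML_cons n (A : Op G) x :
  multilinear n.+1 A -> multilinear n (fun ys => A (x :: ys)).
Proof.
move=> HA xs ys k u v Hs.
by have := HA (x :: xs) ys k u v; rewrite /= addSn Hs => /(_ erefl) ->.
Qed.

Variable par : bool -> G -> G.

Lemma sym_bullet n m (A : Op G) x :
  Defs.symmetric par n.+1 A -> Defs.symmetric par n (bullet m A x).
Proof.
move=> HA xs ys u v c d Hs; rewrite /bullet.
have := HA (x :: xs) ys u v c d; rewrite /= addSn Hs => /(_ erefl) ->.
by rewrite !scalerA mulrC.
Qed.

Lemma sym_cons n (A : Op G) x :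
  Defs.symmetric par n.+1 A -> Defs.symmetric par n (fun ys => A (x :: ys)).
Proof.
move=> HA xs ys u v c d Hs.
by have := HA (x :: xs) ys u v c d; rewrite /= addSn Hs => /(_ erefl) ->.
Qed.


Variable br : G -> G -> G.
Hypothesis par_lin : forall b, linear (par b).
Hypothesis par_idem : forall b x, par b (par b x) = par b x.
Hypothesis par_orth : forall b x, par b (par (~~ b) x) = 0.
Hypothesis brl : forall y, linear (br ^~ y).
Hypothesis brr : forall x, linear (br x).

Lemma brk_linB xs : forall p q b (A B B1 B2 : Op G) k,
  size xs = (p + q)%N ->
  (forall ys, size ys = q -> B ys = k *: B1 ys + B2 ys) ->
  brk par br xs p q b A B = k *: brk par br xs p q b A B1 + brk par br xs p q b A B2.
Proof.
elim: xs => [|x xs IH] p q b A B B1 B2 k /= Hs HB.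
  have q0 : q = 0%N by lia.
  by rewrite HB ?q0 // brr.
apply: step_lin => c.
  case: q Hs HB => [|q] Hs HB; first by rewrite scaler0 addr0.
  apply: IH; first by lia.
  by move=> ys Hys; rewrite /bullet HB /= ?Hys // scalerDr !scalerA mulrC.
case: p Hs => [|p] Hs; first by rewrite scaler0 addr0.
by apply: IH => //; lia.
Qed.

Lemma brk_linA xs : forall p q b (A A1 A2 B : Op G) k,
  size xs = (p + q)%N ->
  (forall ys, size ys = p -> A ys = k *: A1 ys + A2 ys) ->
  brk par br xs p q b A B = k *: brk par br xs p q b A1 B + brk par br xs p q b A2 B.
Proof.
elim: xs => [|x xs IH] p q b A A1 A2 B k /= Hs HA.
  have p0 : p = 0%N by lia.
  by rewrite HA ?p0 // brl.
apply: step_lin => c.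
  case: q Hs => [|q] Hs; first by rewrite scaler0 addr0.
  by apply: IH => //; lia.
case: p Hs HA => [|p] Hs HA; first by rewrite scaler0 addr0.
apply: IH; first by lia.
by move=> ys Hys; rewrite /bullet HA /= ?Hys // scalerDr !scalerA mulrC.
Qed.

Lemma brk_scaleB xs p q b (A B B1 : Op G) k :
  size xs = (p + q)%N -> (forall ys, size ys = q -> B ys = k *: B1 ys) ->
  brk par br xs p q b A B = k *: brk par br xs p q b A B1.
Proof.
move=> Hs HB; rewrite (@brk_linB xs p q b A B B1 B1 (k - 1)) //.
  by rewrite scalerBl scale1r subrK.
by move=> ys /HB ->; rewrite scalerBl scale1r subrK.
Qed.

Lemma brk_scaleA xs p q b (A A1 B : Op G) k :
  size xs = (p + q)%N -> (forall ys, size ys = p -> A ys = k *: A1 ys) ->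
  brk par br xs p q b A B = k *: brk par br xs p q b A1 B.
Proof.
move=> Hs HA; rewrite (@brk_linA xs p q b A A1 A1 B (k - 1)) //.
  by rewrite scalerBl scale1r subrK.
by move=> ys /HA ->; rewrite scalerBl scale1r subrK.
Qed.

Lemma brk_zeroB xs p q b (A B : Op G) :
  size xs = (p + q)%N -> (forall ys, size ys = q -> B ys = 0) ->
  brk par br xs p q b A B = 0.
Proof.
move=> Hs HB; rewrite (@brk_scaleB xs p q b A B B 0) ?scale0r //.
by move=> ys Hy; rewrite scale0r HB.
Qed.

Lemma brk_zeroA xs p q b (A B : Op G) :
  size xs = (p + q)%N -> (forall ys, size ys = p -> A ys = 0) ->
  brk par br xs p q b A B = 0.
Proof.
move=> Hs HA; rewrite (@brk_scaleA xs p q b A A B 0) ?scale0r //.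
by move=> ys Hy; rewrite scale0r HA.
Qed.


Lemma bullet_zero n m (A : Op G) ys :
  multilinear n.+1 A -> size ys = n -> bullet m A 0 ys = 0.
Proof.
move=> HA Hs; rewrite /bullet.
by have := ML_zero _ _ [::] ys HA; rewrite /= Hs => ->; rewrite ?scaler0.
Qed.

Lemma brk0B r p q e (A B : Op G) :
  multilinear q.+1 B -> size r = (p + q)%N ->
  brk par br r p q e A (bullet q.+1 B 0) = 0.
Proof. move=> HB Hs; apply: brk_zeroB => // ys Hy; exact: (bullet_zero _ _ _ _ HB Hy). Qed.

Lemma brk0A r p q e (A B : Op G) :
  multilinear p.+1 A -> size r = (p + q)%N ->
  brk par br r p q e (bullet p.+1 A 0) B = 0.
Proof. by move=> HA Hs; apply: brk_zeroA => // ys Hy; exact: (bullet_zero _ _ _ _ HA Hy). Qed.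

Lemma par_orth2 c x : par (~~ c) (par c x) = 0.
Proof. by have := par_orth (~~ c) x; rewrite negbK. Qed.

Lemma brk_head r p q b (A B : Op G) c x :
  multilinear p A -> multilinear q B -> (size r).+1 = (p + q)%N ->
  brk par br (par c x :: r) p q b A B
  = (p + q)%:R^-1 *: ((if q is q'.+1 then brk par br r p q' (b (+) c) A (bullet q B (par c x)) else 0)
     + sgn K (c && b) *: (if p is p'.+1 then brk par br r p' q b (bullet p A (par c x)) B else 0)).
Proof.
move=> HA HB Hs /=; congr (_ *: _).
have Z : forall c' : bool, c' != c ->
  (if q is q'.+1 then brk par br r p q' (b (+) c') A (bullet q B (par c' (par c x))) else 0)
   + sgn K (c' && b) *: (if p is p'.+1 then brk par br r p' q b (bullet p A (par c' (par c x))) B else 0) = 0.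
  move=> c' Hc; have -> : c' = ~~ c by case: c c' Hc => [] [].
  rewrite par_orth2.
  case: q HB Hs => [|q] HB Hs; case: p HA Hs => [|p] HA Hs;
    rewrite ?scaler0 ?addr0 //.
  - by rewrite brk0A ?scaler0 ?addr0 ?add0r //; lia.
  - by rewrite brk0B ?scaler0 ?addr0 ?add0r //; lia.
  - by rewrite brk0A ?brk0B ?scaler0 ?addr0 ?add0r //; lia.
rewrite big_bool.
case: c Z => Z.
  by rewrite (Z false) //= addr0 par_idem.
by rewrite (Z true) //= add0r par_idem.
Qed.


Lemma M1form r p q e (A B : Op G) c x d y :
  multilinear p A -> multilinear q B -> (size r).+2 = (p + q)%N ->
  (if q is q'.+1 then brk par br (par d y :: r) p q' e A (bullet q B (par c x)) else 0)
  = ((p + q).-1)%:R^-1 *: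
    ((if q is q'.+1 then if q' is q''.+1 then
        brk par br r p q'' (e (+) d) A (bullet q' (bullet q B (par c x)) (par d y)) else 0 else 0)
     + sgn K (d && e) *: (if p is p'.+1 then if q is q'.+1 then
        brk par br r p' q' e (bullet p A (par d y)) (bullet q B (par c x)) else 0 else 0)).
Proof.
move=> HA HB Hs; case: q HB Hs => [|q] HB Hs.
  by case: p {HA Hs} => [|p]; rewrite /= ?scaler0 ?addr0 ?scaler0.
rewrite brk_head //; last by lia.
  by rewrite addnS /=; case: p HA Hs.
exact: ML_bullet.
Qed.

Lemma M2form r p q b (A B : Op G) c x d y :
  multilinear p A -> multilinear q B -> (size r).+2 = (p + q)%N ->
  (if p is p'.+1 then brk par br (par d y :: r) p' q b (bullet p A (par c x)) B else 0)
  = ((p + q).-1)%:R^-1 *: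
    ((if p is p'.+1 then if q is q'.+1 then
        brk par br r p' q' (b (+) d) (bullet p A (par c x)) (bullet q B (par d y)) else 0 else 0)
     + sgn K (d && b) *: (if p is p'.+1 then if p' is p''.+1 then
        brk par br r p'' q b (bullet p' (bullet p A (par c x)) (par d y)) B else 0 else 0)).
Proof.
move=> HA HB Hs; case: p HA Hs => [|p] HA Hs.
  by rewrite /= ?scaler0 ?addr0 ?scaler0.
by rewrite brk_head //; [exact: ML_bullet | lia].
Qed.

Lemma key (n m : K) (b c d : bool) (a a' be ga de de' : G) :
  a = sgn K (c && d) *: a' -> de = sgn K (c && d) *: de' ->
  n *: (m *: (a + sgn K (d && (b (+) c)) *: be) + sgn K (c && b) *: (m *: (ga + sgn K (d && b) *: de)))
  = sgn K (c && d) *: (n *: (m *: (a' + sgn K (c && (b (+) d)) *: ga) + sgn K (d && b) *: (m *: (be + sgn K (c && b) *: de')))).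
Proof.
move=> -> ->; rewrite !scalerDr !scalerA.
rewrite [in RHS]addrACA.
congr (_ *: _ + _ *: _ + (_ *: _ + _ *: _));
  by case: b; case: c; case: d; rewrite /sgn /=; ring.
Qed.


Lemma brk_sym xs : forall ys p q b (A B : Op G) x y c d,
  multilinear p A -> multilinear q B ->
  Defs.symmetric par p A -> Defs.symmetric par q B ->
  ((size xs + size ys).+2 = p + q)%N ->
  brk par br (xs ++ par c x :: par d y :: ys) p q b A B
  = sgn K (c && d) *: brk par br (xs ++ par d y :: par c x :: ys) p q b A B.
Proof.
elim: xs => [|x0 xs IH] ys p q b A B x y c d HA HB SA SB Hs.
  rewrite /= add0n in Hs.
  rewrite ?cat0s (brk_head (par d y :: ys) p q b A B c x) //.
  rewrite (brk_head (par c x :: ys) p q b A B d y) //.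
  rewrite (M1form ys p q (b (+) c) A B c x d y) // (M2form ys p q b A B c x d y) //.
  rewrite (M1form ys p q (b (+) d) A B d y c x) // (M2form ys p q b A B d y c x) //.
  apply: key.
    case: q HB SB Hs => [|[|q]] HB SB Hs; rewrite ?scaler0 //.
    rewrite addbAC; apply: brk_scaleB; first by lia.
    move=> zs Hz; rewrite /bullet.
    have := SB [::] zs x y c d; rewrite /= Hz => /(_ erefl) ->.
    by rewrite !scalerA; congr (_ *: _); ring.
  case: p HA SA Hs => [|[|p]] HA SA Hs; rewrite ?scaler0 //.
  apply: brk_scaleA; first by lia.
  move=> zs Hz; rewrite /bullet.
  have := SA [::] zs x y c d; rewrite /= Hz => /(_ erefl) ->.
  by rewrite !scalerA; congr (_ *: _); ring.
rewrite /=; apply: step_scale => c'.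
  case: q HB SB Hs => [|q] HB SB Hs; first by rewrite scaler0.
  apply: IH => //; first exact: ML_bullet.
    exact: sym_bullet.
  by rewrite /= addSn addnS in Hs; case: Hs.
case: p HA SA Hs => [|p] HA SA Hs; first by rewrite scaler0.
apply: IH => //; first exact: ML_bullet.
  exact: sym_bullet.
by rewrite /= !addSn in Hs; case: Hs.
Qed.

Lemma brk_ML xs : forall ys p q b (A B : Op G) k u v,
  multilinear p A -> multilinear q B ->
  ((size xs + size ys).+1 = p + q)%N ->
  brk par br (xs ++ (k *: u + v) :: ys) p q b A B
  = k *: brk par br (xs ++ u :: ys) p q b A B + brk par br (xs ++ v :: ys) p q b A B.
Proof.
elim: xs => [|x0 xs IH] ys p q b A B k u v HA HB Hs.
  rewrite /= add0n in Hs *.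
  apply: step_lin => c.
    case: q HB Hs => [|q] HB Hs; first by rewrite scaler0 addr0.
    rewrite par_lin; apply: brk_linB; first by lia.
    move=> zs Hz; rewrite /bullet.
    have := HB [::] zs k (par c u) (par c v); rewrite /= Hz => /(_ erefl) ->.
    by rewrite scalerDr !scalerA mulrC.
  case: p HA Hs => [|p] HA Hs; first by rewrite scaler0 addr0.
  rewrite par_lin; apply: brk_linA; first by lia.
  move=> zs Hz; rewrite /bullet.
  have := HA [::] zs k (par c u) (par c v); rewrite /= Hz => /(_ erefl) ->.
  by rewrite scalerDr !scalerA mulrC.
rewrite /=; apply: step_lin => c'.
  case: q HB Hs => [|q] HB Hs; first by rewrite scaler0 addr0.
  apply: IH => //; first exact: ML_bullet.
  by rewrite /= addSn addnS in Hs; case: Hs.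
case: p HA Hs => [|p] HA Hs; first by rewrite scaler0 addr0.
apply: IH => //; first exact: ML_bullet.
by rewrite /= !addSn in Hs; case: Hs.
Qed.


Lemma opart_lin xs : forall b (B B1 B2 : Op G) k,
  (forall ys, size ys = size xs -> B ys = k *: B1 ys + B2 ys) ->
  opart par b B xs = k *: opart par b B1 xs + opart par b B2 xs.
Proof.
elim: xs => [|x xs IH] b B B1 B2 k HB /=; first by rewrite HB // par_lin.
rewrite scaler_sumr -big_split; apply: eq_bigr => c _; apply: IH => ys Hys.
by apply: HB; rewrite /= Hys.
Qed.

Lemma opart_scale xs b (B B1 : Op G) k :
  (forall ys, size ys = size xs -> B ys = k *: B1 ys) ->
  opart par b B xs = k *: opart par b B1 xs.
Proof.
move=> HB; rewrite (@opart_lin xs b B B1 B1 (k - 1)).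
  by rewrite scalerBl scale1r subrK.
by move=> ys /HB ->; rewrite scalerBl scale1r subrK.
Qed.

Lemma opart_zero xs b (B : Op G) :
  (forall ys, size ys = size xs -> B ys = 0) -> opart par b B xs = 0.
Proof.
move=> HB; rewrite (@opart_scale xs b B B 0) ?scale0r //.
by move=> ys Hy; rewrite scale0r HB.
Qed.

Lemma opart_head r b (B : Op G) c x :
  multilinear (size r).+1 B ->
  opart par b B (par c x :: r) = opart par (b (+) c) (fun ys => B (par c x :: ys)) r.
Proof.
move=> HB /=; rewrite big_bool /=.
have h := par_orth2 c x.
have Z : forall e, opart par e (fun ys => B (0 :: ys)) r = 0.
  move=> e; apply: opart_zero => ys Hy.
  by have := ML_zero _ _ [::] ys HB; rewrite /= Hy => ->.
case: c h => /= h; rewrite h Z par_idem.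
  by rewrite addr0.
by rewrite add0r.
Qed.

Lemma opart_ML n (B : Op G) b : multilinear n B -> multilinear n (opart par b B).
Proof.
move=> HB xs; elim: xs n B b HB => [|x0 xs IH] n B b HB ys k u v Hs.
  rewrite /= scaler_sumr -big_split; apply: eq_bigr => c _.
  rewrite par_lin; apply: opart_lin => zs Hz.
  by apply: (HB [::]); rewrite /= Hz -Hs.
case: n HB Hs => [|n] HB Hs //.
rewrite /= scaler_sumr -big_split; apply: eq_bigr => c _.
apply: (IH n); first exact: ML_cons.
by rewrite /= addSn in Hs; case: Hs.
Qed.

Lemma opart_sym n (B : Op G) b :
  multilinear n B -> Defs.symmetric par n B -> Defs.symmetric par n (opart par b B).
Proof.
move=> HB SB xs; elim: xs n B b HB SB => [|x0 xs IH] n B b HB SB ys x y c d Hs.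
  rewrite /= add0n in Hs; subst n; rewrite ?cat0s.
  rewrite (opart_head (par d y :: ys)) // (opart_head (par c x :: ys)) //.
  rewrite (opart_head ys (b (+) c) (fun zs => B (par c x :: zs)) d y); last exact: ML_cons.
  rewrite (opart_head ys (b (+) d) (fun zs => B (par d y :: zs)) c x); last exact: ML_cons.
  rewrite addbAC; apply: opart_scale => zs Hz.
  by have := SB [::] zs x y c d; rewrite /= Hz; apply.
case: n HB SB Hs => [|n] HB SB Hs //.
rewrite /= scaler_sumr; apply: eq_bigr => c' _.
apply: (IH n); first exact: ML_cons.
  exact: sym_cons.
by rewrite /= addSn in Hs; case: Hs.
Qed.


Variable pH : G -> G.
Hypothesis pH_lin : linear pH.
Hypothesis pH_idem : forall x, pH (pH x) = pH x.
Hypothesis pH_gr : forall b x, pH (par b (pH x)) = par b (pH x).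
Hypothesis pH_cl : forall x y, pH (br (pH x) (pH y)) = br (pH x) (pH y).

Lemma fix0 : pH 0 = 0. Proof. exact: lin0. Qed.
Lemma fixD u v : pH u = u -> pH v = v -> pH (u + v) = u + v.
Proof. by move=> hu hv; rewrite linD // hu hv. Qed.
Lemma fixZ k u : pH u = u -> pH (k *: u) = k *: u.
Proof. by move=> hu; rewrite linZ // hu. Qed.
Lemma fix_sum (I : Type) (r : seq I) (P : pred I) (F : I -> G) :
  (forall i, pH (F i) = F i) -> pH (\sum_(i <- r | P i) F i) = \sum_(i <- r | P i) F i.
Proof.
move=> HF; apply: (big_ind (fun u => pH u = u)); first exact: fix0.
  exact: fixD.
by move=> i _; exact: HF.
Qed.

Lemma brk_H xs : forall p q b (A B : Op G),
  (forall ys, pH (A ys) = A ys) -> (forall ys, pH (B ys) = B ys) ->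
  pH (brk par br xs p q b A B) = brk par br xs p q b A B.
Proof.
elim: xs => [|x xs IH] p q b A B HA HB /=.
  by rewrite -[A [::]]HA -[B [::]]HB pH_cl.
apply: fixZ; apply: fix_sum => c; apply: fixD.
  case: q => [|q]; first exact: fix0.
  by apply: IH => // ys; rewrite /bullet linZ // HB.
apply: fixZ; case: p => [|p]; first exact: fix0.
by apply: IH => // ys; rewrite /bullet linZ // HA.
Qed.

Lemma opart_H xs : forall b (B : Op G),
  (forall ys, pH (B ys) = B ys) -> pH (opart par b B xs) = opart par b B xs.
Proof.
elim: xs => [|x xs IH] b B HB /=; first by rewrite -[B [::]]HB pH_gr.
by apply: fix_sum => c; apply: IH => ys; apply: HB.
Qed.

Lemma ML_sum n (I : Type) (r : seq I) (P : pred I) (F : I -> Op G) :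
  (forall i, multilinear n (F i)) ->
  multilinear n (fun xs => \sum_(i <- r | P i) F i xs).
Proof.
move=> HF xs ys k u v Hs; rewrite scaler_sumr -big_split.
by apply: eq_bigr => i _; exact: HF.
Qed.

Lemma SYM_sum n (I : Type) (r : seq I) (P : pred I) (F : I -> Op G) :
  (forall i, Defs.symmetric par n (F i)) ->
  Defs.symmetric par n (fun xs => \sum_(i <- r | P i) F i xs).
Proof.
move=> HF xs ys u v c d Hs; rewrite scaler_sumr.
by apply: eq_bigr => i _; exact: HF.
Qed.

Lemma UH_S (A : Uop G) : in_S par A -> in_S par (UprojH pH A).
Proof.
move=> [[AML [N HN]] AS]; split; first split.
- move=> p xs ys k u v Hs; by rewrite /UprojH AML // pH_lin.
- exists N => p Hp xs Hs; by rewrite /UprojH HN // fix0.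
- move=> p xs ys u v c d Hs; by rewrite /UprojH AS // linZ.
Qed.

Lemma brk_MLn n p q b (A B : Op G) :
  (p + q)%N = n -> multilinear p A -> multilinear q B ->
  multilinear n (fun xs => brk par br xs p q b A B).
Proof. by move=> <- HA HB xs ys k u v Hs; apply: brk_ML. Qed.

Lemma brk_SYMn n p q b (A B : Op G) :
  (p + q)%N = n -> multilinear p A -> multilinear q B ->
  Defs.symmetric par p A -> Defs.symmetric par q B ->
  Defs.symmetric par n (fun xs => brk par br xs p q b A B).
Proof. by move=> <- HA HB SA SB xs ys u v c d Hs; apply: brk_sym. Qed.

Lemma mainS (A B : Uop G) : in_S par A -> in_S par B ->
    Ueq (Ubr par br (UprojH pH A) (UprojH pH B))
        (UprojH pH (Ubr par br (UprojH pH A) (UprojH pH B)))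
    /\ (exists C : Uop G, in_S par C /\
          Ueq (Ubr par br (UprojH pH A) (UprojH pH B)) (UprojH pH C)).
Proof.
move=> SA SB.
have P1 : Ueq (Ubr par br (UprojH pH A) (UprojH pH B))
        (UprojH pH (Ubr par br (UprojH pH A) (UprojH pH B))).
  move=> n xs _; rewrite /UprojH; symmetry.
  rewrite /Ubr; apply: fix_sum => i; rewrite /opbr; apply: fix_sum => b.
  apply: brk_H => ys; first by rewrite pH_idem.
  by apply: opart_H => zs; rewrite pH_idem.
split=> //; exists (Ubr par br (UprojH pH A) (UprojH pH B)); split=> //.
have [[AML [NA HNA]] AS] := UH_S _ SA.
have [[BML [NB HNB]] BS] := UH_S _ SB.
have [[_ [NA' HNA']] _] := SA.
have [[_ [NB' HNB']] _] := SB.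
split; first split.
- move=> n; rewrite /Ubr; apply: ML_sum => i; rewrite /opbr; apply: ML_sum => b.
  apply: brk_MLn; first by rewrite subnKC // -ltnS.
    exact: AML.
  exact: opart_ML.
- exists (NA' + NB')%N => n Hn xs Hxs.
  rewrite /Ubr big1 // => i _; rewrite /opbr big1 // => b _.
  have Hi : (i <= n)%N by rewrite -ltnS.
  case: (leqP NA' i) => h.
    apply: brk_zeroA; first by rewrite subnKC.
    by move=> ys Hy; rewrite /UprojH HNA' // fix0.
  apply: brk_zeroB; first by rewrite subnKC.
  move=> ys Hy; apply: opart_zero => zs Hz.
  rewrite /UprojH HNB' ?fix0 //; last by rewrite Hz.
  lia.
- move=> n; rewrite /Ubr; apply: SYM_sum => i; rewrite /opbr; apply: SYM_sum => b.
  apply: brk_SYMn; first by rewrite subnKC // -ltnS.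
  + exact: AML.
  + exact: opart_ML.
  + exact: AS.
  + apply: opart_sym; [exact: BML | exact: BS].
Qed.

End Aux.


Theorem proposition5p1 (K : fieldType) (G : lmodType K)
    (par : bool -> G -> G) (br : G -> G -> G) (pH : G -> G) :
  [pchar K] =i pred0 ->
  is_lie_superalgebra par br ->
  is_subalgebra_decomp par br pH ->
  forall A B : Uop G, in_S par A -> in_S par B ->
    Ueq (Ubr par br (UprojH pH A) (UprojH pH B))
        (UprojH pH (Ubr par br (UprojH pH A) (UprojH pH B)))
    /\ (exists C : Uop G, in_S par C /\
          Ueq (Ubr par br (UprojH pH A) (UprojH pH B)) (UprojH pH C)).
Proof.
move=> _ [[parlin paridem parorth _] [brl brr _ _ _]] [pHlin pHidem pHgr pHcl] A B SA SB.
exact: (@mainS K G par br parlin paridem parorth brl brr pH pHlin pHidem pHgr pHcl A B SA SB).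
Qed.
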